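(* Let $\delta>0$. Let $(x^\star,u^\star)\in\mathbb{R}^n\times\mathbb{R}^m$ satisfy $f(x^\star)+g(x^\star)u^\star=0$, and write $g^\star:=g(x^\star)$. Then: (a) $x^\star$ is an equilibrium of the midpoint-discretized model with input $u^\star$, i.e. the constant sequences $x_k\equiv x^\star$, $u_k\equiv u^\star$ satisfy $x_{k+1}=x_k+\delta f(z_k)+\delta g(z_k)u_k$ with $z_k=\tfrac12(x_{k+1}+x_k)$. (b) For any sequences $(x_k)_{k\in\mathbb{N}}\subset\mathbb{R}^n$, $(u_k)_{k\in\mathbb{N}}\subset\mathbb{R}^m$ satisfying $$x_{k+1}=x_k+\delta f(z_k)+\delta g(z_k)u_k,\qquad z_k:=\tfrac12(x_{k+1}+x_k),$$ define the output $y_k:=(g^\star)^\top Q z_k$, the equilibrium output $y^\star:=(g^\star)^\top Q x^\star$, and the errors $\tilde x_k:=x_k-x^\star$, $\tilde z_k:=z_k-x^\star$, $\tilde u_k:=u_k-u^\star$, $\tilde y_k:=y_k-y^\star$. Then for every $k\in\mathbb{N}$, $$\frac{1}{\delta}\big(H(\tilde x_{k+1})-H(\tilde x_k)\big)=-\tilde z_k^\top QRQ\,\tilde z_k+\tilde y_k^\top\tilde u_k\le \tilde y_k^\top\tilde u_k,$$ i.e. the map $\tilde u_k\mapsto\tilde y_k$ is passive with storage function $H(\tilde x_k)$ (shifted passivity).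
   Context: Power converter model: fix integers $n,m\ge1$, a symmetric positive definite matrix $Q\in\mathbb{R}^{n\times n}$, skew-symmetric matrices $J_0,J_1,\dots,J_m\in\mathbb{R}^{n\times n}$ ($J_i^\top=-J_i$), a symmetric positive semidefinite matrix $R\in\mathbb{R}^{n\times n}$, matrices $G_0,G_1,\dots,G_m\in\mathbb{R}^{n\times n}$, and a constant vector $E\in\mathbb{R}^n$. Define $H(x):=\tfrac12 x^\top Qx$, $f(x):=(J_0-R)Qx+G_0E\in\mathbb{R}^n$, and $g(x)\in\mathbb{R}^{n\times m}$ as the matrix whose $i$-th column is $J_iQx+G_iE$, $i=1,\dots,m$. The continuous-time model is $\dot x=f(x)+g(x)u$; its midpoint (implicit midpoint rule) discretization with sampling time $\delta>0$ is $x_{k+1}=x_k+\delta f(z_k)+\delta g(z_k)u_k$ with $z_k=\tfrac12(x_{k+1}+x_k)$. *)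

(* Defs.v *)
From mathcomp Require Import all_boot all_order all_algebra.
Set Implicit Arguments. Unset Strict Implicit. Unset Printing Implicit Defensive.
Import Order.TTheory GRing.Theory Num.Theory.
Local Open Scope ring_scope.

Section Model.
Variables (R : realFieldType) (n m : nat).

Definition sc (A : 'M[R]_1) : R := A 0 0.

Definition qf (x : 'cV[R]_n) (A : 'M[R]_n) (y : 'cV[R]_n) : R := sc (x^T *m A *m y).

Definition is_symm (A : 'M[R]_n) : Prop := A^T = A.
Definition is_skewsym (A : 'M[R]_n) : Prop := A^T = - A.
Definition is_posdef (A : 'M[R]_n) : Prop :=
  is_symm A /\ forall x : 'cV[R]_n, x != 0 -> 0 < qf x A x.
Definition is_possemidef (A : 'M[R]_n) : Prop :=
  is_symm A /\ forall x : 'cV[R]_n, 0 <= qf x A x.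

Definition Ham (Q : 'M[R]_n) (x : 'cV[R]_n) : R := 2^-1 * qf x Q x.

Definition fdrift (Q J0 Rm G0 : 'M[R]_n) (E x : 'cV[R]_n) : 'cV[R]_n :=
  (J0 - Rm) *m Q *m x + G0 *m E.

Definition ginput (Q : 'M[R]_n) (J G : 'I_m -> 'M[R]_n) (E x : 'cV[R]_n)
  : 'M[R]_(n, m) :=
  \matrix_(r < n, i < m) (J i *m Q *m x + G i *m E) r 0.

Definition midpoint_step (delta : R) (Q J0 Rm G0 : 'M[R]_n)
  (J G : 'I_m -> 'M[R]_n) (E : 'cV[R]_n)
  (x x' : 'cV[R]_n) (u : 'cV[R]_m) : Prop :=
  let z := 2^-1 *: (x' + x) in
  x' = x + delta *: fdrift Q J0 Rm G0 E z + delta *: (ginput Q J G E z *m u).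

End Model.

(* Main.v *)
Require Import Defs.
From mathcomp Require Import all_boot all_order all_algebra ring lra.
Import Order.TTheory GRing.Theory Num.Theory.
Local Open Scope ring_scope.
Set Implicit Arguments. Unset Strict Implicit.


Section H.
Variables (R : realFieldType) (n : nat).
Implicit Types (p q r : 'cV[R]_n) (A B : 'M[R]_n).

Lemma qfDl p q r A : qf (p + q) A r = qf p A r + qf q A r.
Proof. by rewrite /qf /sc raddfD /= !mulmxDl !mxE. Qed.
Lemma qfNl p r A : qf (- p) A r = - qf p A r.
Proof. by rewrite /qf /sc raddfN /= !mulNmx !mxE. Qed.
Lemma qfZl c p r A : qf (c *: p) A r = c * qf p A r.
Proof. by rewrite /qf /sc linearZ /= -!scalemxAl !mxE. Qed.
Lemma qfDr p q r A : qf r A (p + q) = qf r A p + qf r A q.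
Proof. by rewrite /qf /sc !mulmxDr !mxE. Qed.
Lemma qfNr p r A : qf r A (- p) = - qf r A p.
Proof. by rewrite /qf /sc !mulmxN !mxE. Qed.
Lemma qfZr c p r A : qf r A (c *: p) = c * qf r A p.
Proof. by rewrite /qf /sc -!scalemxAr !mxE. Qed.
Lemma qfDm p q A B : qf p (A + B) q = qf p A q + qf p B q.
Proof. by rewrite /qf /sc mulmxDr mulmxDl !mxE. Qed.
Lemma qfNm p q A : qf p (- A) q = - qf p A q.
Proof. by rewrite /qf /sc mulmxN mulNmx !mxE. Qed.
Lemma qf_mull p q A B : qf (A *m p) B q = qf p (A^T *m B) q.
Proof. by rewrite /qf trmx_mul !mulmxA. Qed.
Lemma qf_mulr p q A B : qf p B (A *m q) = qf p (B *m A) q.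
Proof. by rewrite /qf !mulmxA. Qed.
Lemma qf_tr p q A : qf p A q = qf q A^T p.
Proof.
have e : forall M : 'M[R]_1, sc M = sc M^T by move=> M; rewrite /sc mxE.
by rewrite /qf e !trmx_mul trmxK mulmxA.
Qed.
Lemma qf_skew p A : A^T = - A -> qf p A p = 0.
Proof. move=> hA; have := qf_tr p p A; rewrite hA qfNm; lra. Qed.
Lemma qf_sum (I : finType) (F : I -> 'cV[R]_n) r A :
  qf (\sum_i F i) A r = \sum_i qf (F i) A r.
Proof.
apply: (big_morph (fun p => qf p A r)); first by move=> *; rewrite qfDl.
by rewrite /qf /sc linear0 !mul0mx mxE.
Qed.
End H.

Section H2.
Variables (R : realFieldType) (n m : nat).
Definition Dm (Q : 'M[R]_n) (J : 'I_m -> 'M[R]_n) (w : 'cV[R]_n) : 'M[R]_(n, m) :=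
  \matrix_(r < n, i < m) (J i *m Q *m w) r 0.

Lemma ginputD Q J G E (w xs : 'cV[R]_n) :
  ginput Q J G E (w + xs) = ginput Q J G E xs + Dm Q J w.
Proof.
apply/matrixP=> r i; rewrite [LHS]mxE [in RHS]mxE.
rewrite [ginput _ _ _ _ xs r i]mxE [Dm _ _ _ r i]mxE mulmxDr.
by rewrite -addrA addrC [LHS]mxE.
Qed.

Lemma Dm_mul Q J w (u : 'cV[R]_m) :
  Dm Q J w *m u = \sum_i u i 0 *: (J i *m Q *m w).
Proof.
apply/matrixP=> r c; rewrite ord1 !mxE summxE; apply: eq_bigr => i _.
by rewrite !mxE mulrC.
Qed.

Lemma skew_term (A Q : 'M[R]_n) (w : 'cV[R]_n) : A^T = - A ->
  qf (A *m Q *m w) Q w = 0.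
Proof.
move=> hA; rewrite -mulmxA !qf_mull; apply: qf_skew.
rewrite !trmx_mul !trmxK hA mulNmx mulmxN mulmxA opprK.
by [].
Qed.
Lemma Ham_diff (Q : 'M[R]_n) (a w : 'cV[R]_n) : Q^T = Q ->
  Ham Q (a + 2^-1 *: w) - Ham Q (a - 2^-1 *: w) = qf w Q a.
Proof.
move=> hQ; rewrite /Ham !(qfDl, qfDr, qfNl, qfNr, qfZl, qfZr).
rewrite [qf a Q w]qf_tr hQ; by field.
Qed.
End H2.

Theorem proposition2 (R : realFieldType) (n m : nat)
  (Q : 'M[R]_n) (J0 : 'M[R]_n) (J : 'I_m -> 'M[R]_n) (Rm : 'M[R]_n)
  (G0 : 'M[R]_n) (G : 'I_m -> 'M[R]_n) (E : 'cV[R]_n)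
  (hn : (1 <= n)%N) (hm : (1 <= m)%N)
  (hQ : is_posdef Q) (hJ0 : is_skewsym J0) (hJ : forall i, is_skewsym (J i))
  (hR : is_possemidef Rm)
  (delta : R) (hdelta : 0 < delta)
  (xs : 'cV[R]_n) (us : 'cV[R]_m)
  (heq : fdrift Q J0 Rm G0 E xs + ginput Q J G E xs *m us = 0) :
  (* (a) equilibrium of the discretized model *)
  (forall k : nat,
     midpoint_step delta Q J0 Rm G0 J G E ((fun _ : nat => xs) k)
       ((fun _ : nat => xs) k.+1) ((fun _ : nat => us) k))
  /\
  (* (b) shifted passivity *)
  (forall (x : nat -> 'cV[R]_n) (u : nat -> 'cV[R]_m),
     (forall k, midpoint_step delta Q J0 Rm G0 J G E (x k) (x k.+1) (u k)) ->
     let gs := ginput Q J G E xs in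
     forall k : nat,
       let z := 2^-1 *: (x k.+1 + x k) in
       let y := gs^T *m Q *m z in
       let ys := gs^T *m Q *m xs in
       let xt := x k - xs in
       let xt' := x k.+1 - xs in
       let zt := z - xs in
       let ut := u k - us in
       let yt := y - ys in
       delta^-1 * (Ham Q xt' - Ham Q xt)
         = - qf zt (Q *m Rm *m Q) zt + sc (yt^T *m ut)
       /\ - qf zt (Q *m Rm *m Q) zt + sc (yt^T *m ut) <= sc (yt^T *m ut)).
Proof.
case: hQ => hQs hQp; case: hR => hRs hRp.
rewrite /is_symm in hQs hRs.
split.
  move=> k; rewrite /midpoint_step.
  have -> : 2^-1 *: (xs + xs) = xs.
    by apply/matrixP=> i j; rewrite !mxE; field.
  by rewrite -addrA -scalerDr heq scaler0 addr0.
move=> x u hstep gs k z y ys xt xt' zt ut yt.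
have hs := hstep k; rewrite /midpoint_step -/z in hs.
set v := x k.+1 - x k.
have hv : v = delta *: (fdrift Q J0 Rm G0 E z + ginput Q J G E z *m u k).
  by rewrite /v {1}hs addrAC [x k + _]addrC addrK [RHS]scalerDr.
have hfg : fdrift Q J0 Rm G0 E z + ginput Q J G E z *m u k =
   (J0 - Rm) *m Q *m zt + gs *m ut + Dm Q J zt *m u k.
  have ez : z = zt + xs by rewrite /zt subrK.
  move/eqP: heq; rewrite addr_eq0 => /eqP hf.
  rewrite /fdrift in hf; rewrite ez /fdrift ginputD mulmxDr -[_ + _ + G0 *m E]addrA hf (mulmxDl gs) /ut (mulmxBr gs).
  move: ((J0 - Rm) *m Q *m zt) (gs *m us) (gs *m u k) (Dm Q J zt *m u k) => a b c d.
  by apply/matrixP=> i j; rewrite !mxE; ring.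
have key : qf v Q zt = delta * (- qf zt (Q *m Rm *m Q) zt + sc (yt^T *m ut)).
  rewrite hv hfg qfZl !(qfDl _ _ zt Q); congr (_ * _).
  rewrite mulmxBl mulmxBl (qfDl _ _ zt Q) qfNl (skew_term _ _ hJ0) add0r.
  rewrite Dm_mul qf_sum big1 ?addr0; last first.
    by move=> i _; rewrite qfZl (skew_term _ _ (hJ i)) mulr0.
  congr (_ + _).
    by rewrite -mulmxA !qf_mull hRs hQs !mulmxA.
  have -> : yt = gs^T *m Q *m zt by rewrite /yt /y /ys /zt -mulmxBr.
  by rewrite qf_tr hQs /qf !trmx_mul trmxK !mulmxA hQs.
have hxt' : xt' = zt + 2^-1 *: v.
  by apply/matrixP=> i j; rewrite /xt' /zt /z /v !mxE; field.
have hxt : xt = zt - 2^-1 *: v.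
  by apply/matrixP=> i j; rewrite /xt /zt /z /v !mxE; field.
have hH : Ham Q xt' - Ham Q xt = qf v Q zt.
  by rewrite hxt' hxt Ham_diff.
have hpos : 0 <= qf zt (Q *m Rm *m Q) zt.
  have -> : qf zt (Q *m Rm *m Q) zt = qf (Q *m zt) Rm (Q *m zt).
    by rewrite qf_mull qf_mulr hQs.
  exact: hRp.
split; last by lra.
rewrite hH key mulrA mulVf ?mul1r //.
by rewrite lt0r_neq0.
Qed.
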